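(* Let $n=m_1m_2$ with $m_1,m_2\geq 2$. Let $A\subseteq\mathbb{Z}_n$, $A_1\subseteq\mathbb{Z}_{m_1}$, $A_2\subseteq\mathbb{Z}_{m_2}$ be nonempty subsets none of which contains $0$. Suppose that for $i=1,2$ we have $f_i(A)\subseteq A_i$, where $f_i:\mathbb{Z}_n\to\mathbb{Z}_{m_i}$ is the natural map. Then $D_A(n)\geq D_{A_1}(m_1)+D_{A_2}(m_2)-1$.
   Context: $\mathbb{Z}_m$ is the integers mod $m$. For nonempty $A\subseteq\mathbb{Z}_m\setminus\{0\}$, a sequence $(x_1,\ldots,x_k)$ in $\mathbb{Z}_m$ is an $A$-weighted zero-sum sequence if there exist $a_1,\ldots,a_k\in A$ with $\sum a_ix_i=0$; $D_A(m)$ is the least positive integer $k$ such that every sequence of length $k$ in $\mathbb{Z}_m$ has a nonempty subsequence which is an $A$-weighted zero-sum sequence. The natural map $\mathbb{Z}_n\to\mathbb{Z}_m$ for $m\mid n$ is $a+n\mathbb{Z}\mapsto a+m\mathbb{Z}$. *)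

(* Defs.v *)
From HB Require Import structures.
From mathcomp Require Import all_boot all_order all_algebra.
Set Implicit Arguments. Unset Strict Implicit. Unset Printing Implicit Defensive.
Import GRing.Theory.
Local Open Scope ring_scope.

Definition has_Awzs (m k : nat) (A : {set 'Z_m}) (x : 'I_k -> 'Z_m) : Prop :=
  exists (I : {set 'I_k}) (w : 'I_k -> 'Z_m),
    I != set0 /\ (forall i, i \in I -> w i \in A) /\
    \sum_(i in I) w i * x i = 0.

Definition DA_prop (m : nat) (A : {set 'Z_m}) (k : nat) : Prop :=
  forall x : 'I_k -> 'Z_m, has_Awzs A x.

Definition is_DA (m : nat) (A : {set 'Z_m}) (d : nat) : Prop :=
  (0 < d)%N /\ DA_prop A d /\ (forall k, (0 < k)%N -> DA_prop A k -> (d <= k)%N).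

Definition natmap (n m : nat) (x : 'Z_n) : 'Z_m := (nat_of_ord x)%:R.

(* Main.v *)
Require Import Defs.
From mathcomp Require Import all_boot all_order all_algebra.
From Stdlib Require Import Classical.
From mathcomp Require Import zify.
Set Implicit Arguments. Unset Strict Implicit. Unset Printing Implicit Defensive.
Import GRing.Theory.
Local Open Scope ring_scope.

Lemma natmap_nat m n k : (1 < m)%N -> (1 < n)%N -> (m %| n)%N ->
  natmap m (k%:R : 'Z_n) = k%:R.
Proof.
move=> hm hn hmn; rewrite /natmap val_Zp_nat //.
by rewrite -(Zp_nat_mod hm) -[RHS](Zp_nat_mod hm) modn_dvdm.
Qed.

Lemma natmapD m n (a b : 'Z_n) : (1 < m)%N -> (1 < n)%N -> (m %| n)%N ->
  natmap m (a + b) = natmap m a + natmap m b.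
Proof.
move=> hm hn hmn.
have -> : a + b = ((a : nat) + b)%:R by rewrite natrD !natr_Zp.
by rewrite !natmap_nat // natrD /natmap.
Qed.

Lemma natmapM m n (a b : 'Z_n) : (1 < m)%N -> (1 < n)%N -> (m %| n)%N ->
  natmap m (a * b) = natmap m a * natmap m b.
Proof.
move=> hm hn hmn.
have -> : a * b = ((a : nat) * b)%:R by rewrite natrM !natr_Zp.
by rewrite !natmap_nat // natrM /natmap.
Qed.

Lemma natmap0 m n : natmap m (0 : 'Z_n) = 0.
Proof. by rewrite /natmap. Qed.

Lemma natmap_sum m n (hm : (1 < m)%N) (hn : (1 < n)%N) (hmn : (m %| n)%N)
  (I : finType) (P : pred I) (F : I -> 'Z_n) :
  natmap m (\sum_(i | P i) F i) = \sum_(i | P i) natmap m (F i).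
Proof.
exact: (big_morph (natmap m) (fun a b => natmapD a b hm hn hmn) (natmap0 m n)).
Qed.

Lemma kill m1 m2 (s : 'Z_(m1 * m2)) : (1 < m1)%N -> (1 < m2)%N ->
  (m2%:R * s = 0) -> natmap m1 s = 0.
Proof.
move=> h1 h2 H.
have hn : (1 < m1 * m2)%N by rewrite (leq_trans h1) // leq_pmulr // ltnW.
have H' : ((m2 * s)%N%:R : 'Z_(m1 * m2)) = 0 by rewrite natrM natr_Zp.
have := congr1 (@nat_of_ord _) H'.
rewrite val_Zp_nat //= => /eqP.
rewrite -/(dvdn _ _) (mulnC m2) dvdn_pmul2r ?(ltnW h2) // => /dvdnP [q hq].
by rewrite /natmap hq natrM pchar_Zp // mulr0.
Qed.

Lemma DA0 m (B : {set 'Z_m}) : ~ DA_prop B 0.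
Proof.
move=> H; have [I [w [hI _]]] := H (fun _ => 0).
have eI : I = set0 by apply/setP => -[i hi]; exfalso; by rewrite ltn0 in hi.
by rewrite eI eqxx in hI.
Qed.

Lemma bad m (B : {set 'Z_m}) e : is_DA B e ->
  exists x : 'I_(e.-1) -> 'Z_m, ~ has_Awzs B x.
Proof.
move=> [he [_ hmin]].
case: (classic (DA_prop B e.-1)) => H.
  exfalso; case: (posnP e.-1) => h0.
    by move: H; rewrite h0 => /DA0.
  by have := hmin _ h0 H; rewrite leqNgt ltn_predL he.
by apply: not_all_ex_not.
Qed.

Lemma restr m (B : {set 'Z_m}) k L (hk : (k <= L)%N) (z : 'I_L -> 'Z_m) :
  ~ has_Awzs B z -> ~ has_Awzs B (fun i : 'I_k => z (widen_ord hk i)).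
Proof.
move=> nz [I [w [hI [hw hs]]]]; apply: nz.
pose w' (j : 'I_L) := match (insub (val j) : option 'I_k) with Some i => w i | None => 0 end.
have e : forall i, w' (widen_ord hk i) = w i.
  move=> i; rewrite /w'; case: insubP => [i' _ /= hv|]; last by rewrite /= ltn_ord.
  by rewrite (val_inj hv).
exists (widen_ord hk @: I), w'; split; first by rewrite imset_eq0.
split.
  by move=> j /imsetP [i hi ->]; rewrite e hw.
rewrite big_imset /=.
  by apply: etrans hs; apply: eq_bigr => i _; rewrite e.
move=> a b _ _ h; apply/val_inj; exact: (congr1 val h).
Qed.

Theorem lemma1p7 (m1 m2 : nat) (hm1 : (2 <= m1)%N) (hm2 : (2 <= m2)%N)
  (A : {set 'Z_(m1 * m2)}) (A1 : {set 'Z_m1}) (A2 : {set 'Z_m2})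
  (hA : A != set0) (hA1 : A1 != set0) (hA2 : A2 != set0)
  (h0A : 0 \notin A) (h0A1 : 0 \notin A1) (h0A2 : 0 \notin A2)
  (hf1 : forall x, x \in A -> natmap m1 x \in A1)
  (hf2 : forall x, x \in A -> natmap m2 x \in A2)
  (d d1 d2 : nat) (hd : is_DA A d) (hd1 : is_DA A1 d1) (hd2 : is_DA A2 d2) :
  (d1 + d2 - 1 <= d)%N.
Proof.
have hn : (1 < m1 * m2)%N by rewrite (leq_trans hm1) // leq_pmulr // ltnW.
have d2n : (m2 %| m1 * m2)%N by apply: dvdn_mull.
have d1n : (m1 %| m1 * m2)%N by apply: dvdn_mulr.
have [x1 bx1] := bad hd1.
have [x2 bx2] := bad hd2.
pose z (i : 'I_(d1.-1 + d2.-1)) : 'Z_(m1 * m2) :=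
  match split i with inl a => ((m2 * x1 a)%N)%:R | inr b => ((x2 b : nat))%:R end.
have bz : ~ has_Awzs A z.
  move=> [I [w [hI [hw hs]]]].
  rewrite big_mkcond big_split_ord /= in hs.
  have zl : forall a, z (lshift _ a) = ((m2 * x1 a)%N)%:R.
    by move=> a; rewrite /z (unsplitK (inl a)).
  have zr : forall b, z (rshift _ b) = ((x2 b : nat))%:R.
    by move=> b; rewrite /z (unsplitK (inr b)).
  have J0 : forall b, rshift d1.-1 b \notin I.
    move=> b; apply/negP => hb; apply: bx2.
    exists [set b | rshift d1.-1 b \in I], (fun b => natmap m2 (w (rshift d1.-1 b))).
    split; first by apply/set0Pn; exists b; rewrite inE.
    split; first by move=> b'; rewrite inE => /hw/hf2.
    have := congr1 (natmap m2) hs.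
    rewrite natmapD // !natmap_sum // natmap0 big1 ?add0r; last first.
      move=> a _; case: ifP => _; last exact: natmap0.
      by rewrite natmapM // zl natmap_nat // natrM pchar_Zp // mul0r mulr0.
    move=> H; apply: etrans H; rewrite [LHS]big_mkcond; apply: eq_bigr => b' _; rewrite inE.
    case: ifP => _; last by rewrite natmap0.
    by rewrite natmapM // zr natmap_nat // natr_Zp.
  have hs2 : m2%:R * (\sum_(a < d1.-1) (if lshift d2.-1 a \in I then
      w (lshift d2.-1 a) * (x1 a : nat)%:R else 0)) = 0 :> 'Z_(m1 * m2).
    apply: etrans hs.
    rewrite mulr_sumr [X in _ = _ + X]big1 ?addr0; last by move=> b _; rewrite (negbTE (J0 b)).
    apply: eq_bigr => a _; case: ifP => _; last by rewrite mulr0.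
    by rewrite zl natrM mulrCA.
  have k := kill hm1 hm2 hs2.
  apply: bx1.
  exists [set a | lshift d2.-1 a \in I], (fun a => natmap m1 (w (lshift d2.-1 a))).
  split.
    case/set0Pn: hI => i hi; apply/set0Pn.
    case: (splitP i) => [a ea|b eb].
      exists a; rewrite inE; have -> : lshift d2.-1 a = i by apply/val_inj; rewrite /= ea.
      done.
    by have := J0 b; rewrite (_ : rshift _ b = i) ?hi //; apply/val_inj; rewrite /= eb.
  split; first by move=> a; rewrite inE => /hw/hf1.
  apply: etrans k; rewrite natmap_sum // [LHS]big_mkcond; apply: eq_bigr => a _; rewrite inE.
  case: ifP => _; last by rewrite natmap0.
  by rewrite natmapM // natmap_nat // natr_Zp.
rewrite leqNgt; apply/negP => hlt.
have [p1 _] := hd1; have [p2 _] := hd2.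
have hk : (d <= d1.-1 + d2.-1)%N by lia.
exact: (restr (hk:=hk) bz (hd.2.1 _)).
Qed.
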